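(* The short exact sequence $1\to\mathrm{Sym}(Z)\to\tilde QV\xrightarrow{\pi} V\to 1$ splits.
   Context: Let $\{0,1\}^*$ be the finite words over $\{0,1\}$, the vertices of the rooted binary tree in which $x$ has children $x0$ and $x1$ (two edge colours), and let $Z=\{0,1\}^*\cup\{\zeta\}$ with $\zeta$ an extra isolated vertex. $\tilde QV$ is the group of bijections $\tau$ of $Z$ with $\tau(x0)=\tau(x)0$ and $\tau(x1)=\tau(x)1$ for all but finitely many $x\in\{0,1\}^*$. Each such $\tau$ induces a homeomorphism $\pi(\tau)$ of $\{0,1\}^{\mathbb N}$ by $\pi(\tau)(\ell\omega)=\tau(\ell)\omega$, for $\ell$ in a finite maximal prefix-antichain $L$ with $\tau(\ell s)=\tau(\ell)s$ for all $\ell\in L$ and words $s$; this gives a surjective homomorphism $\pi$ onto Thompson's group $V$ whose kernel is $\mathrm{Sym}(Z)$, the group of finitely supported permutations of $Z$. *)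

(* Defs.v *)
From mathcomp Require Import all_boot.
Set Implicit Arguments. Unset Strict Implicit. Unset Printing Implicit Defensive.

(* Vertices of the rooted binary tree: finite words over {0,1} = seq bool;
   the children of x are x0 = rcons x false and x1 = rcons x true. *)
Definition word := seq bool.

(* Z = {0,1}^* ∪ {ζ}; Some w is the word w, None is the isolated vertex ζ. *)
Definition Zv := option word.

Definition cantor := nat -> bool.

Definition pcat (l : word) (w : cantor) : cantor :=
  fun n => if n < size l then nth false l n else w (n - size l).

(* τ(xb) = τ(x)b  (false if τ(x) = ζ, since then τ(x)b is undefined). *)
Definition child_ok (t : Zv -> Zv) (x : word) (b : bool) : Prop :=
  match t (Some x) with
  | Some y => t (Some (rcons x b)) = Some (rcons y b)
  | None => False
  end.

Definition in_QVt (t : Zv -> Zv) : Prop :=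
  bijective t /\
  exists F : seq word, forall x : word, x \notin F -> forall b, child_ok t x b.

Definition max_antichain (L : seq word) : Prop :=
  uniq L /\
  (forall l1 l2, l1 \in L -> l2 \in L -> l1 != l2 -> ~~ prefix l1 l2) /\
  (forall w : word, exists2 l, l \in L & prefix l w || prefix w l).

(* π(τ) = f : there is a finite maximal prefix-antichain L with
   τ(ℓs) = τ(ℓ)s for all ℓ ∈ L and words s, and f(ℓω) = τ(ℓ)ω. *)
Definition induces (t : Zv -> Zv) (f : cantor -> cantor) : Prop :=
  exists L : seq word, max_antichain L /\
    forall l, l \in L -> exists m : word,
      t (Some l) = Some m /\
      (forall s : word, t (Some (l ++ s)) = Some (m ++ s)) /\
      (forall w : cantor, f (pcat l w) =1 pcat m w).

Definition in_V (f : cantor -> cantor) : Prop :=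
  exists L R : seq word,
    [/\ max_antichain L, max_antichain R, size L = size R &
        forall i, i < size L -> forall w : cantor,
          f (pcat (nth [::] L i) w) =1 pcat (nth [::] R i) w].

(* Main.v *)
From Stdlib Require Import ClassicalEpsilon FunctionalExtensionality.
Require Import Defs.
From mathcomp Require Import all_boot.
From mathcomp Require Import zify.

Definition zero : cantor := fun _ => false.
Definition enc (z : Zv) : cantor :=
  match z with None => zero | Some x => pcat (rcons x true) zero end.
Definition sec (f : cantor -> cantor) (z : Zv) : Zv :=
  epsilon (inhabits z) (fun z' => enc z' = f (enc z)).
Definition ev0 (u : cantor) := exists N, forall n, N <= n -> u n = false.

Lemma sec_spec {f z z'} : enc z' = f (enc z) -> enc (sec f z) = f (enc z).
Proof. move=> h; apply: (epsilon_spec (inhabits z) (fun z' => enc z' = f (enc z))); by exists z'. Qed.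

Lemma pcat_cat l s w : pcat (l ++ s) w = pcat l (pcat s w).
Proof.
apply: functional_extensionality => n; rewrite /pcat size_cat nth_cat.
case: (ltnP n (size l)) => h1; first by rewrite ltn_addr.
have -> : (n < size l + size s) = (n - size l < size s) by lia.
case: ifP => // _; congr w; lia.
Qed.

Lemma enc_some_at x : enc (Some x) (size x) = true.
Proof. by rewrite /= /pcat size_rcons ltnSn nth_rcons ltnn eqxx. Qed.

Lemma enc_some_beyond {x n} : size x < n -> enc (Some x) n = false.
Proof. by move=> h; rewrite /= /pcat size_rcons ltnNge h. Qed.

Lemma enc_inj : injective enc.
Proof.
move=> [x|] [y|] //= E.
- case: (ltngtP (size x) (size y)) => h.
  + by move: (enc_some_beyond h); rewrite /= E -/(enc (Some y)) enc_some_at.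
  + by move: (enc_some_beyond (x:=y) h); rewrite /= -E -/(enc (Some x)) enc_some_at.
  congr Some; apply: (@eq_from_nth _ false) => // n hn.
  have := f_equal (fun u => u n) E; rewrite /pcat !size_rcons !nth_rcons -h hn.
  by rewrite ltnS ltnW.
- by have := enc_some_at x; rewrite /= E.
- by have := enc_some_at y; rewrite /= -E.
Qed.

Lemma ev0_enc {u} : ev0 u -> exists z, enc z = u.
Proof.
case=> N; elim: N u => [|N IH] u hu.
  exists None; apply: functional_extensionality => n; by rewrite hu.
case hN: (u N).
  exists (Some (mkseq u N)); apply: functional_extensionality => n.
  rewrite /= /pcat size_rcons size_mkseq nth_rcons size_mkseq.
  case: (ltnP n N) => h1; first by rewrite ltnS ltnW // nth_mkseq.
  case: (ltnP n N.+1) => h2.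
    have -> : n = N by lia. by rewrite eqxx.
  by rewrite hu.
apply: IH => n hn; case: (ltngtP n N) => h; [lia| |by rewrite h].
by apply: hu.
Qed.

Lemma enc_ev0 z : ev0 (enc z).
Proof.
case: z => [x|]; last by exists 0.
exists (size x).+1 => n hn; exact: enc_some_beyond.
Qed.

Lemma pcat_ev0 l w : ev0 w -> ev0 (pcat l w).
Proof.
case=> N hN; exists (N + size l) => n hn; rewrite /pcat.
case: ltnP => h; first lia. apply: hN; lia.
Qed.

Lemma ev0_shift l w : ev0 (pcat l w) -> ev0 w.
Proof.
case=> N hN; exists N => n hn; have := hN (n + size l) ltac:(lia).
rewrite /pcat ltnNge leq_addl /= addnK //.
Qed.

Lemma pcat_at l w n : pcat l w (n + size l) = w n.
Proof. by rewrite /pcat ltnNge leq_addl /= addnK. Qed.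

Fixpoint maxsz (L : seq word) : nat :=
  if L is l :: L' then maxn (size l) (maxsz L') else 0.

Lemma maxsz_ge {L l} : l \in L -> size l <= maxsz L.
Proof.
elim: L => //= a L IH; rewrite in_cons => /orP [/eqP -> | h].
  exact: leq_maxl.
by apply: leq_trans (IH h) (leq_maxr _ _).
Qed.

Lemma cover L u : max_antichain L ->
  exists2 i, i < size L & u = pcat (nth [::] L i) (fun n => u (n + size (nth [::] L i))).
Proof.
case=> _ [_ hc].
set w := mkseq u (maxsz L).
have [l lL hl] := hc w.
have pl : prefix l w.
  case/orP: hl => // /prefixP [t ht].
  have := maxsz_ge lL; rewrite ht size_cat size_mkseq => h.
  have : size t == 0 by lia.
  by rewrite size_eq0 => /eqP t0; rewrite t0 cats0 prefix_refl.
exists (index l L); first by rewrite index_mem.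
rewrite nth_index //.
apply: functional_extensionality => n; rewrite /pcat.
case: ltnP => h.
  move/prefixP: pl => [t ht].
  have : nth false w n = u n by rewrite nth_mkseq // (leq_trans h) // maxsz_ge.
  by rewrite ht nth_cat h => ->.
by rewrite subnK.
Qed.

Definition VW (f : cantor -> cantor) (L R : seq word) :=
  [/\ max_antichain L, max_antichain R, size L = size R &
        forall i, i < size L -> forall w : cantor,
          f (pcat (nth [::] L i) w) =1 pcat (nth [::] R i) w].

Lemma VW_app {f L R i} w : VW f L R -> i < size L ->
  f (pcat (nth [::] L i) w) = pcat (nth [::] R i) w.
Proof. by case=> _ _ _ h hi; apply: functional_extensionality; apply: h. Qed.

Lemma pcat_prefix {a b w1 w2} : pcat a w1 = pcat b w2 -> size a <= size b -> prefix a b.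
Proof.
move=> E hab; rewrite prefixE; apply/eqP.
apply: (@eq_from_nth _ false); first by rewrite size_takel.
move=> n; rewrite size_takel // => hn.
rewrite nth_take //.
have := f_equal (fun u => u n) E; rewrite /pcat hn (leq_trans hn hab) => ->.
by [].
Qed.

Lemma VW_inj {f L R} : VW f L R -> injective f.
Proof.
move=> hV u1 u2 E.
case: (hV) => hL hR hs hf.
have [i hi e1] := cover _ u1 hL.
have [j hj e2] := cover _ u2 hL.
move: E; rewrite e1 e2.
set w1 := (fun n => _). set w2 := (fun n => _).
rewrite (VW_app _ hV hi) (VW_app _ hV hj) => E.
have hij : i = j.
  have hiR : i < size R by rewrite -hs.
  have hjR : j < size R by rewrite -hs.
  apply/eqP; rewrite -(nth_uniq [::] hiR hjR); last by case: hR.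
  apply/negPn/negP => ne.
  case: hR => _ [hac _].
  have iR : nth [::] R i \in R by rewrite mem_nth // -hs.
  have jR : nth [::] R j \in R by rewrite mem_nth // -hs.
  case: (leqP (size (nth [::] R i)) (size (nth [::] R j))) => h.
    by move: (hac _ _ iR jR ne); rewrite (pcat_prefix E h).
  rewrite eq_sym in ne.
  by move: (hac _ _ jR iR ne); rewrite (pcat_prefix (esym E) (ltnW h)).
clear e1 e2; clearbody w1 w2; move: hij E => <- E; congr pcat; apply: functional_extensionality => n.
by have := f_equal (fun u => u (n + size (nth [::] R i))) E; rewrite !pcat_at.
Qed.

Lemma VW_ev0 {f L R u} : VW f L R -> ev0 u -> ev0 (f u).
Proof.
move=> hV hu; case: (hV) => hL _ _ _.
have [i hi e] := cover _ u hL.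
rewrite e (VW_app _ hV hi); apply: pcat_ev0; apply: (@ev0_shift (nth [::] L i)).
by rewrite -e.
Qed.

Lemma sec_enc {f L R} z : VW f L R -> enc (sec f z) = f (enc z).
Proof.
move=> hV; have [z' hz'] := ev0_enc (VW_ev0 hV (enc_ev0 z)).
exact: (sec_spec hz').
Qed.

Lemma sec_inj {f L R} : VW f L R -> injective (sec f).
Proof.
move=> hV z1 z2 E; apply: enc_inj; apply: (VW_inj hV).
by rewrite -!(sec_enc _ hV) E.
Qed.

Lemma sec_surj {f L R} : VW f L R -> forall y, exists x, sec f x = y.
Proof.
move=> hV y; case: (hV) => hL hR hs hf.
have [i hi e] := cover _ (enc y) hR.
set w := (fun n => _) in e.
have hw : ev0 w by apply: (@ev0_shift (nth [::] R i)); rewrite -e; apply: enc_ev0.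
have [z hz] := ev0_enc (@pcat_ev0 (nth [::] L i) w hw).
exists z; apply: enc_inj; rewrite (sec_enc _ hV) hz.
have hiL : i < size L by rewrite hs.
by rewrite (VW_app _ hV hiL) -e.
Qed.

Lemma sec_cone {f L R i} s : VW f L R -> i < size L ->
  sec f (Some (nth [::] L i ++ s)) = Some (nth [::] R i ++ s).
Proof.
move=> hV hi; apply: enc_inj; rewrite (sec_enc _ hV) /= !rcons_cat !pcat_cat.
by rewrite (VW_app _ hV hi).
Qed.

Lemma inj_surj_bij (t : Zv -> Zv) : injective t -> (forall y, exists x, t x = y) -> bijective t.
Proof.
move=> hi hs.
exists (fun y => epsilon (inhabits y) (fun x => t x = y)).
  move=> x; apply: hi; exact: (epsilon_spec (inhabits (t x)) (fun x' => t x' = t x) (ex_intro _ x erefl)).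
move=> y; exact: (epsilon_spec (inhabits y) (fun x' => t x' = y) (hs y)).
Qed.

Definition bad (L : seq word) : seq word :=
  flatten [seq [seq take k l | k <- iota 0 (size l)] | l <- L].

Lemma good_cone {L x} : max_antichain L -> x \notin bad L ->
  exists2 i, i < size L & exists s, x = nth [::] L i ++ s.
Proof.
case=> _ [_ hc] hx.
have [l lL hl] := hc x.
have [s hs] : exists s, x = l ++ s.
  case/orP: hl => [/prefixP // | /prefixP [t ht]].
  case: t ht => [|b t] ht; first by exists [::]; rewrite ht !cats0.
  exfalso; move/negP: hx; apply; apply/flattenP.
  exists [seq take k l | k <- iota 0 (size l)]; first by apply/mapP; exists l.
  apply/mapP; exists (size x).
    by rewrite mem_iota add0n ht size_cat /= addnS ltnS leq_addr.
  by rewrite ht take_size_cat.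
exists (index l L); first by rewrite index_mem.
by exists s; rewrite nth_index.
Qed.

Theorem lemma2p3 :
  exists s : (cantor -> cantor) -> (Zv -> Zv),
    (forall f, in_V f -> in_QVt (s f) /\ induces (s f) f) /\
    (forall f g, in_V f -> in_V g -> f =1 g -> s f =1 s g) /\
    (forall f g, in_V f -> in_V g -> s (f \o g) =1 s f \o s g).
Proof.
exists sec; split; [|split].
- move=> f [L [R hV0]].
  have hV : VW f L R by exact: hV0.
  case: (hV) => hL hR hs hf.
  split.
    split; first exact: (inj_surj_bij _ (sec_inj hV) (sec_surj hV)).
    exists (bad L) => x hx b; rewrite /child_ok.
    have [i hi [s ->]] := good_cone hL hx.
    rewrite (sec_cone s hV hi). by rewrite !rcons_cat (sec_cone _ hV hi).
  exists L; split => // l lL.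
  have hi : index l L < size L by rewrite index_mem.
  have el := nth_index [::] lL.
  move: hi el; set i := index l L; clearbody i => hi <-.
  exists (nth [::] R i).
  split; first by have := sec_cone [::] hV hi; rewrite !cats0.
  split; first by move=> s; exact: sec_cone.
  exact: hf.
- move=> f g _ _ e.
  have -> : f = g by apply: functional_extensionality.
  by [].
- move=> f g [L' [R' hW0]] [L [R hV0]] z.
  have hV : VW g L R by exact: hV0.
  have hW : VW f L' R' by exact: hW0.
  apply: enc_inj.
  rewrite /=.
  have e : enc (sec f (sec g z)) = (f \o g) (enc z).
    rewrite /= -(sec_enc z hV).
    exact: (sec_enc _ hW).
  by rewrite (sec_spec e) e.
Qed.
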